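(* For every integer $m\geq 0$, $$\text{(i)}\ A_{1,m}=\frac{m(m+1)(m+\lambda)(m+\lambda+1)}{2\lambda+1};\qquad\text{(ii)}\ \widetilde A_{1,m}=\frac{m(m+\lambda)\big(m^2+\lambda m-\frac12\big)}{2\lambda+1}.$$
   Context: Fix $\lambda>-1/2$. Define polynomials $Q_m$ by $Q_0=1$, $Q_1(\mu)=1-\frac{2(\lambda+1)(\lambda+2)}{2\lambda+1}\mu$ and, for $m\geq2$, $$Q_m-Q_{m-1}=\frac{m(2m-1)(2m+\lambda)}{(m-1+\lambda)(2m-2+\lambda)(2m-1+2\lambda)}\big[Q_{m-1}-Q_{m-2}\big]-\frac{2m(2m-1+\lambda)(2m+\lambda)}{2m-1+2\lambda}\,\mu\,Q_{m-1}(\mu).$$ Define $\widetilde Q_m$ by $\widetilde Q_0=1$, $\widetilde Q_1(\mu)=1-\frac{\lambda+1}{2}\mu$ and, for $m\geq2$, $$\widetilde Q_m-\widetilde Q_{m-1}=\frac{(m-1)(2m-1)(2m-1+\lambda)}{(m-1+\lambda)(2m-3+\lambda)(2m-3+2\lambda)}\big[\widetilde Q_{m-1}-\widetilde Q_{m-2}\big]-\frac{(2m-1)(2m-2+\lambda)(2m-1+\lambda)}{2(m-1+\lambda)}\,\mu\,\widetilde Q_{m-1}(\mu).$$ Write $Q_m(\mu)=\sum_{i=0}^m(-1)^iA_{i,m}\mu^i$ and $\widetilde Q_m(\mu)=\sum_{i=0}^m(-1)^i\widetilde A_{i,m}\mu^i$ (so $A_{0,m}=\widetilde A_{0,m}=1$),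 with $A_{i,m}=\widetilde A_{i,m}=0$ for $i>m$. *)

(* Defs.v *)
From mathcomp Require Import all_boot all_order all_algebra.
Set Implicit Arguments. Unset Strict Implicit. Unset Printing Implicit Defensive.
Import Order.TTheory GRing.Theory Num.Theory.
Local Open Scope ring_scope.

Section Defs.
Variable R : realFieldType.
Variable lam : R.

Definition Q1 : {poly R} :=
  1 - ((2 * (lam + 1) * (lam + 2)) / (2 * lam + 1)) *: 'X.

Definition Qstep (m : nat) (a b : {poly R}) : {poly R} :=
  let mR := m%:R in
  b + ((mR * (2 * mR - 1) * (2 * mR + lam))
        / ((mR - 1 + lam) * (2 * mR - 2 + lam) * (2 * mR - 1 + 2 * lam))) *: (b - a)
    - ((2 * mR * (2 * mR - 1 + lam) * (2 * mR + lam)) / (2 * mR - 1 + 2 * lam)) *: ('X * b).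

(* Qpair n = (Q_n, Q_{n+1}) *)
Fixpoint Qpair (n : nat) : {poly R} * {poly R} :=
  match n with
  | 0 => (1, Q1)
  | n'.+1 => let p := Qpair n' in (p.2, Qstep n'.+2 p.1 p.2)
  end.

Definition Q (m : nat) : {poly R} := (Qpair m).1.

Definition Qt1 : {poly R} := 1 - ((lam + 1) / 2) *: 'X.

Definition Qtstep (m : nat) (a b : {poly R}) : {poly R} :=
  let mR := m%:R in
  b + (((mR - 1) * (2 * mR - 1) * (2 * mR - 1 + lam))
        / ((mR - 1 + lam) * (2 * mR - 3 + lam) * (2 * mR - 3 + 2 * lam))) *: (b - a)
    - (((2 * mR - 1) * (2 * mR - 2 + lam) * (2 * mR - 1 + lam)) / (2 * (mR - 1 + lam))) *: ('X * b).

Fixpoint Qtpair (n : nat) : {poly R} * {poly R} :=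
  match n with
  | 0 => (1, Qt1)
  | n'.+1 => let p := Qtpair n' in (p.2, Qtstep n'.+2 p.1 p.2)
  end.

Definition Qt (m : nat) : {poly R} := (Qtpair m).1.

(* Q_m(mu) = sum_i (-1)^i A_{i,m} mu^i *)
Definition A (i m : nat) : R := (-1) ^+ i * (Q m)`_i.
Definition At (i m : nat) : R := (-1) ^+ i * (Qt m)`_i.

End Defs.

(* Main.v *)
Require Import Defs.
From mathcomp Require Import all_boot all_order all_algebra.
From mathcomp Require Import ring lra.
Import Order.TTheory GRing.Theory Num.Theory.
Local Open Scope ring_scope.

Definition f {R : realFieldType} (lam : R) (n : nat) : R := (n%:R * (n%:R + 1) * (n%:R + lam) * (n%:R + lam + 1)) / (2 * lam + 1).
Definition g {R : realFieldType} (lam : R) (n : nat) : R := (n%:R * (n%:R + lam) * (n%:R ^+ 2 + lam * n%:R - 1 / 2)) / (2 * lam + 1).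

Lemma coefX1 (R : realFieldType) (p : {poly R}) : ('X * p)`_0 = 0 /\ ('X * p)`_1 = p`_0.
Proof. by rewrite !coefXM. Qed.

Lemma Qpair_coef (R : realFieldType) (lam : R) (hlam : - (1 / 2) < lam) n : let p := Qpair lam n in
  p.1`_0 = 1 /\ p.2`_0 = 1 /\ p.1`_1 = - f lam n /\ p.2`_1 = - f lam n.+1.
Proof.
have hx : forall k : nat, 0 <= k%:R :> R by move=> k; exact: ler0n.
elim: n => [|n [h0 [h1 [h2 h3]]]] /=.
  rewrite /Q1 /f !coefB !coefZ !coefC coefX /=.
  split=> //; split; first by rewrite mulr0 subr0.
  split; first by rewrite !mul0r oppr0.
  rewrite coefX /= mulr1 sub0r; congr (- _); ring.
split=> //; split.
  rewrite /Qstep !(coefB, coefD, coefZ) (coefX1 _ _).1 h0 h1; ring.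
split=> //.
rewrite /Qstep !(coefB, coefD, coefZ) (coefX1 _ _).2 h1 h2 h3 /f.
have e2 : n.+2%:R = n%:R + 2 :> R by rewrite -addn2 natrD.
have e1 : n.+1%:R = n%:R + 1 :> R by rewrite -addn1 natrD.
rewrite e2 e1.
have := hx n; move: (n%:R) => x hx0.
have ? : (x + 2) - 1 + lam != 0 by rewrite gt_eqF //; lra.
have ? : 2 * (x + 2) - 2 + lam != 0 by rewrite gt_eqF //; lra.
have ? : 2 * (x + 2) - 1 + 2 * lam != 0 by rewrite gt_eqF //; lra.
have ? : 2 * lam + 1 != 0 by rewrite gt_eqF //; lra.
field; rewrite ?nat1r; apply/and4P; split => //.
Qed.

Lemma Qtpair_coef (R : realFieldType) (lam : R) (hlam : - (1 / 2) < lam) n : let p := Qtpair lam n in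
  p.1`_0 = 1 /\ p.2`_0 = 1 /\ p.1`_1 = - g lam n /\ p.2`_1 = - g lam n.+1.
Proof.
have hx : forall k : nat, 0 <= k%:R :> R by move=> k; exact: ler0n.
elim: n => [|n [h0 [h1 [h2 h3]]]] /=.
  rewrite /Qt1 /g !coefB !coefZ !coefC coefX /=.
  split=> //; split; first by rewrite mulr0 subr0.
  split; first by rewrite !mul0r oppr0.
  have ? : 2 * lam + 1 != 0 by rewrite gt_eqF //; lra.
  have ? : 2 != 0 :> R by rewrite pnatr_eq0.
  rewrite coefX /= mulr1 sub0r; congr (- _). field => //.
split=> //; split.
  rewrite /Qtstep !(coefB, coefD, coefZ) (coefX1 _ _).1 h0 h1; ring.
split=> //.
rewrite /Qtstep !(coefB, coefD, coefZ) (coefX1 _ _).2 h1 h2 h3 /g.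
have e2 : n.+2%:R = n%:R + 2 :> R by rewrite -addn2 natrD.
have e1 : n.+1%:R = n%:R + 1 :> R by rewrite -addn1 natrD.
rewrite e2 e1.
have := hx n; move: (n%:R) => x hx0.
have ? : (x + 2) - 1 + lam != 0 by rewrite gt_eqF //; lra.
have ? : 2 * (x + 2) - 3 + lam != 0 by rewrite gt_eqF //; lra.
have ? : 2 * (x + 2) - 3 + 2 * lam != 0 by rewrite gt_eqF //; lra.
have ? : 2 * lam + 1 != 0 by rewrite gt_eqF //; lra.
have ? : 2 != 0 :> R by rewrite pnatr_eq0.
field; by apply/and4P.
Qed.


Theorem lemma3p1 (R : realFieldType) (lam : R) (hlam : - (1 / 2) < lam) (m : nat) :
  A lam 1 m = (m%:R * (m%:R + 1) * (m%:R + lam) * (m%:R + lam + 1)) / (2 * lam + 1)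
  /\ At lam 1 m = (m%:R * (m%:R + lam) * (m%:R ^+ 2 + lam * m%:R - 1 / 2)) / (2 * lam + 1).
Proof.
have [_ [_ [h _]]] := Qpair_coef _ _ hlam m.
have [_ [_ [ht _]]] := Qtpair_coef _ _ hlam m.
rewrite /A /At /Q /Qt h ht /f /g expr1.
by split; rewrite mulN1r opprK.
Qed.
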